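(* For each $C>0$ there is an irrational number $x=[a_0,a_1,a_2,\ldots]$ with all $a_i\in\{1,2,3,4\}$ whose sequence of partial quotients is eventually periodic with period length at least $C$, and whose Jacobi sequence is the constant sequence $1,1,1,\ldots$. Furthermore, there are uncountably many irrational numbers $x=[a_0,a_1,a_2,\ldots]$ with all $a_i\in\{1,2,3,4\}$ whose continued fraction expansion is not eventually periodic and whose Jacobi sequence is the constant sequence $1,1,1,\ldots$.
   Context: For $x\in\mathbb{R}\setminus\mathbb{Q}$ with regular continued fraction expansion $x=[a_0,a_1,a_2,\ldots]$, the convergents $s_k/t_k$ are defined by $s_{-1}=1$, $s_0=a_0$, $s_k=a_ks_{k-1}+s_{k-2}$ and $t_{-1}=0$, $t_0=1$, $t_k=a_kt_{k-1}+t_{k-2}$ for $k\ge1$. For an odd natural number $n$ and an integer $m$ coprime to $n$, $\left(\frac{m}{n}\right)$ is the usual Jacobi symbol; if $n$ is even and $\gcd(m,n)=1$, one sets $\left(\frac{m}{n}\right)=*$, a fixed symbol different from $\pm1$. The Jacobi sequence of $x$ is $\left(\frac{s_k}{t_k}\right)$, $k\ge 0$. An irrational number whose partial quotients all lie in $\{1,2,3,4\}$ is called a 4-representative. *)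

(* Defs.v *)
From HB Require Import structures.
From mathcomp Require Import all_boot all_order all_algebra.
From mathcomp Require Import all_classical all_reals all_analysis.
Set Implicit Arguments. Unset Strict Implicit. Unset Printing Implicit Defensive.
Import Order.TTheory GRing.Theory Num.Theory numFieldNormedType.Exports.
Local Open Scope classical_set_scope.
Local Open Scope ring_scope.

(* Convergents of the regular continued fraction [a 0; a 1; a 2; ...].
   cf_num a k = s_k, cf_den a k = t_k.  We compute the pair (s_{k-1}, s_k)
   (resp. (t_{k-1}, t_k)) by recursion, with s_{-1} = 1, s_0 = a 0,
   t_{-1} = 0, t_0 = 1. *)
Fixpoint cf_pair (a : nat -> nat) (init : nat * nat) (k : nat) : nat * nat :=
  match k with
  | 0 => init
  | k'.+1 => let p := cf_pair a init k' in (p.2, a k'.+1 * p.2 + p.1)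
  end.

Definition cf_num (a : nat -> nat) (k : nat) : nat := (cf_pair a (1, a 0) k).2.
Definition cf_den (a : nat -> nat) (k : nat) : nat := (cf_pair a (0, 1) k).2.

Definition cf_expansion {R : realType} (x : R) (a : nat -> nat) : Prop :=
  (forall i, (0 < i)%N -> (0 < a i)%N) /\
  ((fun k => (cf_num a k)%:R / (cf_den a k)%:R : R) @ \oo --> x).

Definition legendre (m p : nat) : int :=
  if dvdn p m then 0
  else if [exists y : 'I_p, modn (muln y y) p == modn m p] then 1 else -1.

(* The value of the (extended) Jacobi symbol: either an integer, or the
   special symbol * (used when the denominator is even). *)
Inductive jsym := JInt of int | JStar.

Definition jacobi (m n : nat) : jsym :=
  if odd n then JInt (\prod_(p <- primes n) legendre m p ^+ logn p n)%R
  else JStar.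

Definition jacobi_seq (a : nat -> nat) (k : nat) : jsym :=
  jacobi (cf_num a k) (cf_den a k).

Definition eventually_periodic_with (a : nat -> nat) (p : nat) : Prop :=
  exists N, forall n, (N <= n)%N -> a (n + p) = a n.

Definition eventually_periodic (a : nat -> nat) : Prop :=
  exists p, (0 < p)%N /\ eventually_periodic_with a p.

Definition period_length (a : nat -> nat) (p : nat) : Prop :=
  (0 < p)%N /\ eventually_periodic_with a p /\
  forall q, (0 < q)%N -> eventually_periodic_with a q -> (p <= q)%N.

Definition four_digits (a : nat -> nat) : Prop :=
  forall i, (1 <= a i <= 4)%N.

(* Main.v *)
Require Import Defs.
From HB Require Import structures.
From mathcomp Require Import all_boot all_order all_algebra all_field.
From mathcomp Require Import all_classical all_reals all_analysis.
From mathcomp Require Import zify ring lra.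
Import Order.TTheory GRing.Theory Num.Theory.
Set Implicit Arguments. Unset Strict Implicit. Unset Printing Implicit Defensive.

Section Euler.
Variable p : nat.
Hypothesis p_pr : prime p.
Hypothesis p_odd : odd p.
Local Notation F := 'F_p.
Local Open Scope ring_scope.

Lemma Fnat_eq (a b : nat) : ((a%:R : F) == b%:R) = (a %% p == b %% p)%N.
Proof.
apply/eqP/eqP => [e|e].
  by rewrite -(val_Fp_nat p_pr a) -(val_Fp_nat p_pr b) e.
by rewrite -(Fp_nat_mod p_pr a) e Fp_nat_mod.
Qed.

Lemma Fnat_eq0 (a : nat) : ((a%:R : F) == 0) = (p %| a)%N.
Proof. by rewrite -[0 : F]/(0%:R) Fnat_eq mod0n. Qed.

Definition hp := p./2.

Lemma hp_double : p = (hp + hp).+1.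
Proof. by rewrite /hp addnn -{1}(odd_double_half p) p_odd add1n. Qed.

Lemma Fexp_pred (x : F) : x != 0 -> x ^+ (hp + hp) = 1.
Proof.
move=> x0; have e := expf_card x; rewrite card_Fp // in e; have : x ^+ (hp + hp).+1 = x by rewrite -hp_double. rewrite exprS.
by move=> /(congr1 (fun y => x^-1 * y)); rewrite mulKf // mulVf.
Qed.

Lemma euler_pm (x : F) : x != 0 -> x ^+ hp = 1 \/ x ^+ hp = -1.
Proof.
move=> x0; have : (x ^+ hp) ^+ 2 == 1 by rewrite -exprM muln2 -addnn Fexp_pred.
by rewrite sqrf_eq1 => /orP[/eqP->|/eqP->]; [left|right].
Qed.

Lemma two_neq0 : (2%:R : F) != 0.
Proof.
rewrite Fnat_eq0; apply/negP => /(dvdn_leq (isT : (0 < 2)%N)).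
rewrite leq_eqVlt ltnS => /orP[/eqP p2|p1]; first by move: p_odd; rewrite p2.
by move: (prime_gt1 p_pr); rewrite ltnNge p1.
Qed.

Lemma one_neq_m1 : (1 : F) != -1.
Proof.
apply/negP => /eqP e; move: two_neq0; rewrite -[2%:R]/(1 + 1 : F).
by rewrite {1}e addNr eqxx.
Qed.

Lemma euler_sq (x : F) : x != 0 -> (exists y : F, y ^+ 2 = x) <-> x ^+ hp = 1.
Proof.
move=> x0; split.
  move=> [y yx]; rewrite -yx -exprM mul2n -addnn.
  by apply: Fexp_pred; apply: contra x0 => /eqP y0; rewrite -yx y0 expr0n.
move=> xh; case: (pselect (exists y : F, y ^+ 2 = x)) => // nsq; exfalso.
pose rs := x :: [seq (i%:R : F) ^+ 2 | i <- iota 1 hp].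
have hp0 : (0 < hp)%N.
  rewrite /hp; have := prime_gt1 p_pr; rewrite hp_double ltnS.
  by rewrite /hp; case: (p./2).
have pn0 : ('X^hp - 1%:P : {poly F}) != 0.
  by rewrite -size_poly_eq0 size_XnsubC.
have Hin : forall i, i \in iota 1 hp -> (0 < i < p)%N.
  move=> i; rewrite mem_iota => /andP[i1 i2]; rewrite hp_double; lia.
have Hnz : forall i, i \in iota 1 hp -> (i%:R : F) != 0.
  move=> i /Hin /andP[i0 ip]; rewrite Fnat_eq0; apply/negP => /(dvdn_leq i0).
  by rewrite leqNgt ip.
have := max_poly_roots pn0 (rs := rs).
rewrite size_XnsubC // [size rs]/= size_map size_iota ltnn.
have Hu : uniq rs.
  rewrite /= map_inj_in_uniq ?iota_uniq ?andbT.
    apply/negP => /mapP[i _ e]; apply: nsq; by exists i%:R.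
  move=> i j hi hj /eqP; rewrite -subr_eq0 subr_sqr mulf_eq0 => /orP[].
    rewrite subr_eq0 Fnat_eq => /eqP.
    move: (Hin _ hi) (Hin _ hj) => /andP[_ ip] /andP[_ jp].
    by rewrite !modn_small.
  rewrite -natrD Fnat_eq0 => /(dvdn_leq _).
  move: (Hin _ hi) (Hin _ hj) => /andP[i0 ip] /andP[_ jp].
  move: hi hj; rewrite !mem_iota => /andP[_ ih] /andP[_ jh].
  rewrite addn_gt0 i0 hp_double => /(_ isT); lia.
move=> H; suff Ha : all (root ('X^hp - 1%:P)) rs by move: (H Ha Hu).
rewrite /= rootE !hornerE xh subrr eqxx /=.
apply/allP => z /mapP[i hi ->]; rewrite rootE !hornerE -exprM mul2n -addnn.
by rewrite Fexp_pred ?Hnz // subrr.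
Qed.


Lemma legendre_pm (m : nat) : ~~ (p %| m)%N -> legendre m p = 1 \/ legendre m p = -1.
Proof. by rewrite /legendre => /negbTE ->; case: ifP; [left|right]. Qed.

Lemma legendre_0 (m : nat) : (p %| m)%N -> legendre m p = 0.
Proof. by rewrite /legendre => ->. Qed.

Lemma legendre_mod (m : nat) : legendre (m %% p) p = legendre m p.
Proof. by rewrite /legendre /dvdn !modn_mod. Qed.

Lemma sign_F_inj (u v : int) : (u = 1 \/ u = -1) -> (v = 1 \/ v = -1) ->
  (u%:~R : F) = v%:~R -> u = v.
Proof.
move=> hu hv; have h := one_neq_m1.
case: hu => ->; case: hv => -> //; rewrite ?rmorphN1 ?rmorph1 => e; exfalso;
  by move/eqP: h; apply; first [exact: e | exact: (esym e)].
Qed.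

Lemma sign_pm (k : nat) : ((-1) ^+ k : int) = 1 \/ ((-1) ^+ k : int) = -1.
Proof. by rewrite -signr_odd; case: (odd k); [right|left]; rewrite ?expr1 ?expr0. Qed.

Lemma legendre_F (m : nat) : ~~ (p %| m)%N ->
  ((legendre m p)%:~R : F) = (m%:R : F) ^+ hp.
Proof.
move=> pm; have m0 : (m%:R : F) != 0 by rewrite Fnat_eq0.
rewrite /legendre (negbTE pm); case: ifP => [/existsP[y /eqP hy]|ny].
  suff /(euler_sq m0) -> : exists z : F, z ^+ 2 = m%:R by [].
  by exists y%:R; rewrite -natrX; apply/eqP; rewrite Fnat_eq -mulnn hy.
have nsq : ~ exists z : F, z ^+ 2 = m%:R.
  move=> [z hz]; move/negbT/negP: ny; apply; apply/existsP.
  have zp : (val z < p)%N by have := ltn_ord z; rewrite [X in (_ < X)%N -> _]Fp_cast.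
  exists (Ordinal zp); rewrite /= -Fnat_eq natrM -expr2.
  by rewrite [X in X ^+ 2]natr_Zp hz.
case: (euler_pm m0) => // e1; exfalso; apply: nsq; exact/(euler_sq m0).
Qed.

Lemma legendre_mul (a b : nat) : legendre (a * b) p = legendre a p * legendre b p.
Proof.
case pa: (p %| a)%N; first by rewrite (legendre_0 pa) legendre_0 ?mul0r // dvdn_mulr.
case pb: (p %| b)%N; first by rewrite (legendre_0 pb) legendre_0 ?mulr0 // dvdn_mull.
have pab : ~~ (p %| a * b)%N by rewrite Euclid_dvdM // pa pb.
apply: sign_F_inj.
- exact: legendre_pm.
- case: (legendre_pm (negbT pa)) => ->; case: (legendre_pm (negbT pb)) => ->;
  by [left|right|right|left].
by rewrite intrM !legendre_F ?pa ?pb // natrM exprMn.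
Qed.

Lemma legendre_sign (m k : nat) : ~~ (p %| m)%N ->
  (m%:R : F) ^+ hp = (-1) ^+ k -> legendre m p = (-1) ^+ k.
Proof.
move=> pm e; apply: sign_F_inj; [exact: legendre_pm|exact: sign_pm|].
by rewrite legendre_F // e rmorphXn /= rmorphN1.
Qed.


Definition rk m k := ((m * k) %% p)%N.
Definition fk m k := if (rk m k <= hp)%N then rk m k else (p - rk m k)%N.
Definition gmu m := (\sum_(1 <= k < hp.+1) (hp < rk m k : nat))%N.

Lemma hp_lt_p : (hp < p)%N.
Proof. by rewrite [X in (_ < X)%N]hp_double ltnS leq_addr. Qed.

Lemma rk_range m k : ~~ (p %| m)%N -> (1 <= k <= hp)%N -> (0 < rk m k < p)%N.
Proof.
move=> pm /andP[k1 kh]; apply/andP; split; last by rewrite /rk ltn_pmod ?prime_gt0.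
rewrite /rk lt0n -/(dvdn p (m * k)) Euclid_dvdM // negb_or pm /=.
apply/negP => /(dvdn_leq k1); rewrite leqNgt (leq_ltn_trans kh) //.
exact: hp_lt_p.
Qed.

Lemma fk_range m k : ~~ (p %| m)%N -> (1 <= k <= hp)%N -> (1 <= fk m k <= hp)%N.
Proof.
move=> pm hk; have := rk_range pm hk; rewrite /fk.
have := hp_double; case: (leqP (rk m k) hp) => h; lia.
Qed.

Lemma fk_inj m k j : ~~ (p %| m)%N -> (1 <= k <= hp)%N -> (1 <= j <= hp)%N ->
  fk m k = fk m j -> k = j.
Proof.
move=> pm hk hj; have rkr := rk_range pm hk; have rjr := rk_range pm hj.
have pd := hp_double.
have cop : coprime p m by rewrite prime_coprime.
have H1 : rk m k = rk m j -> k = j.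
  wlog kj : k j hk hj {rkr rjr} / (j <= k)%N.
    move=> W e; case: (leqP j k) => [kj|/ltnW jk]; first exact: W.
    by symmetry; apply: W.
  rewrite /rk => /eqP; rewrite eqn_mod_dvd ?leq_mul2l ?kj ?orbT // -mulnBr.
  rewrite Gauss_dvdr //; case: (posnP (k - j)) => [e _|pos]; first lia.
  move/(dvdn_leq pos); lia.
have H2 : (rk m k + rk m j)%N <> p.
  move=> e; have : (p %| m * (k + j))%N.
    by rewrite /dvdn mulnDr -modnDm -/(rk m k) -/(rk m j) e modnn.
  rewrite Gauss_dvdr // => /dvdn_leq; lia.
rewrite /fk; case: (leqP (rk m k) hp) => hk'; case: (leqP (rk m j) hp) => hj'.
- exact: H1.
- lia.
- lia.
- move=> e; apply: H1; lia.
Qed.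

Lemma fk_perm m : ~~ (p %| m)%N ->
  perm_eq [seq fk m k | k <- index_iota 1 hp.+1] (index_iota 1 hp.+1).
Proof.
move=> pm; have U : uniq [seq fk m k | k <- index_iota 1 hp.+1].
  rewrite map_inj_in_uniq ?iota_uniq // => k j; rewrite !mem_index_iota => hk hj.
  by apply: fk_inj.
apply: uniq_perm => //; first exact: iota_uniq.
have Hs : {subset [seq fk m k | k <- index_iota 1 hp.+1] <= index_iota 1 hp.+1}.
  move=> x /mapP[k]; rewrite !mem_index_iota => hk ->.
  have := fk_range pm hk; lia.
have [_ E] := uniq_min_size U Hs (eq_leq (esym (size_map _ _))).
exact: E.
Qed.

Lemma fk_F m k : ~~ (p %| m)%N -> (1 <= k <= hp)%N ->
  ((m * k)%:R : F) = (-1) ^+ (hp < rk m k : nat) * (fk m k)%:R.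
Proof.
move=> pm hk; have := rk_range pm hk; rewrite /fk -(Fp_nat_mod p_pr (m * k)) -/(rk m k).
case: (leqP (rk m k) hp) => h.
  by move=> _; rewrite expr0 mul1r.
move=> /andP[_ /ltnW rp]; rewrite expr1 natrB // pchar_Fp_0 // sub0r mulN1r opprK.
by rewrite (Fp_nat_mod p_pr).
Qed.


Lemma prod_k_neq0 : (\prod_(1 <= k < hp.+1) (k%:R : F)) != 0.
Proof.
rewrite prodf_seq_neq0; apply/allP => k; rewrite mem_index_iota => hk /=.
rewrite Fnat_eq0; apply/negP => /dvdn_leq; have := hp_lt_p; lia.
Qed.

Lemma gauss_lemma m : ~~ (p %| m)%N -> legendre m p = (-1) ^+ gmu m.
Proof.
move=> pm; apply: legendre_sign => //.
have E : \prod_(1 <= k < hp.+1) ((m * k)%:R : F) =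
         (m%:R ^+ hp) * \prod_(1 <= k < hp.+1) (k%:R : F).
  rewrite (eq_big_nat _ _ (F2 := fun k => (m%:R : F) * k%:R)); last first.
    by move=> i _; rewrite natrM.
  by rewrite big_split /= prodr_const_nat subSS subn0.
have E2 : \prod_(1 <= k < hp.+1) ((m * k)%:R : F) =
         (-1) ^+ gmu m * \prod_(1 <= k < hp.+1) (k%:R : F).
  rewrite (eq_big_nat _ _ (F2 := fun k => (-1) ^+ (hp < rk m k : nat) * ((fk m k)%:R : F))); last first.
    by move=> i hi; apply: fk_F.
  rewrite big_split /= prodrXr; congr (_ * _).
  by rewrite -(big_map (fk m) xpredT (fun k => (k%:R : F))) (perm_big _ (fk_perm pm)).
by apply: (mulIf prod_k_neq0); rewrite -E -E2.
Qed.

Lemma eisenstein m : ~~ (p %| m)%N -> odd m ->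
  odd (gmu m) = odd (\sum_(1 <= k < hp.+1) (m * k) %/ p).
Proof.
move=> pm om.
set S := (\sum_(1 <= k < hp.+1) k)%N.
set Q := (\sum_(1 <= k < hp.+1) (m * k) %/ p)%N.
set R := (\sum_(1 <= k < hp.+1) rk m k)%N.
set X := (\sum_(1 <= k < hp.+1) ((hp < rk m k : nat) * fk m k))%N.
have E1 : (m * S = Q * p + R)%N.
  rewrite /S big_distrr /= /Q big_distrl /= /R -big_split /=.
  by apply: eq_bigr => k _; rewrite /rk -divn_eq.
have E3 : (\sum_(1 <= k < hp.+1) fk m k = S)%N.
  by rewrite -(big_map (fk m) xpredT (fun k => k)) (perm_big _ (fk_perm pm)).
have E2 : (R + 2 * X = S + gmu m * p)%N.
  rewrite -E3 /R /X /gmu big_distrr big_distrl -!big_split /=.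
  apply: eq_big_nat => k hk; have := rk_range pm hk; rewrite /fk.
  case: (leqP (rk m k) hp) => h /=; lia.
have := congr1 odd E1; have := congr1 odd E2.
rewrite !oddD !oddM om p_odd /=.
by move: (odd S) (odd Q) (odd R) (odd X) (odd (gmu m)) => [] [] [] [] [].
Qed.


Lemma legendre_neg1 : legendre p.-1 p = (-1) ^+ hp.
Proof.
have p0 := prime_gt0 p_pr.
have pm : ~~ (p %| p.-1)%N.
  apply/negP => /dvdn_leq; have := prime_gt1 p_pr; lia.
apply: legendre_sign => //.
have : ((p.-1)%:R + 1 : F) = 0 by rewrite natr1 prednK // pchar_Fp_0.
by move/eqP; rewrite addr_eq0 => /eqP ->.
Qed.

Lemma legendre_1 : legendre 1 p = 1.
Proof.
have pm : ~~ (p %| 1)%N by rewrite dvdn1; apply/eqP => e; move: p_pr; rewrite e.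
by rewrite (legendre_sign (k := 0) pm) // expr1n expr0.
Qed.

Lemma legendre_eis m : ~~ (p %| m)%N -> odd m ->
  legendre m p = (-1) ^+ (\sum_(1 <= k < hp.+1) (k * m) %/ p)%N.
Proof.
move=> pm om; rewrite gauss_lemma // -signr_odd eisenstein // signr_odd.
by under eq_bigr do rewrite mulnC.
Qed.

End Euler.

Lemma cnt_le n N : (\sum_(1 <= j < N.+1) (j <= n : nat))%N = minn n N.
Proof.
elim: N => [|N IH]; first by rewrite big_nil; lia.
rewrite big_nat_recr //= IH; case: (leqP N.+1 n) => h /=; lia.
Qed.

Lemma lattice p q : prime p -> prime q -> odd p -> odd q -> p != q ->
  (\sum_(1 <= k < (hp p).+1) (k * q) %/ p + \sum_(1 <= j < (hp q).+1) (j * p) %/ q =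
   hp p * hp q)%N.
Proof.
move=> pp pq op oq pnq.
have hpd := hp_double op; have hqd := hp_double oq.
have p0 := prime_gt0 pp; have q0 := prime_gt0 pq.
have E1 : forall k, (1 <= k < (hp p).+1)%N ->
    ((k * q) %/ p = \sum_(1 <= j < (hp q).+1) (j * p <= k * q : nat))%N.
  move=> k hk; under eq_bigr do rewrite -leq_divRL //.
  rewrite cnt_le; apply/esym/minn_idPl; rewrite -ltnS ltn_divLR //; nia.
have E2 : forall j, (1 <= j < (hp q).+1)%N ->
    ((j * p) %/ q = \sum_(1 <= k < (hp p).+1) (k * q <= j * p : nat))%N.
  move=> j hj; under eq_bigr do rewrite -leq_divRL //.
  rewrite cnt_le; apply/esym/minn_idPl; rewrite -ltnS ltn_divLR //; nia.
rewrite (eq_big_nat _ _ E1) (eq_big_nat _ _ E2).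
rewrite [X in (_ + X)%N](exchange_big) -big_split /=.
rewrite -[(hp p * hp q)%N]/(hp p * hp q)%N.
have -> : (hp p * hp q = \sum_(1 <= k < (hp p).+1) \sum_(1 <= j < (hp q).+1) 1)%N.
  by rewrite sum_nat_const_nat sum_nat_const_nat !subSS !subn0 muln1 mulnC.
apply: eq_big_nat => k hk; rewrite -big_split /=; apply: eq_big_nat => j hj.
have cpq : coprime p q by rewrite prime_coprime // dvdn_prime2.
have ne : (j * p != k * q)%N.
  apply/eqP => e; have : (p %| k * q)%N by rewrite -e dvdn_mull.
  rewrite Gauss_dvdl // => /dvdn_leq; lia.
case: (leqP (j * p) (k * q)) => h /=; lia.
Qed.

Lemma quad_recip p q : prime p -> prime q -> odd p -> odd q -> p != q ->
  (legendre q p * legendre p q = (-1) ^+ (hp p * hp q)%N)%R.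
Proof.
move=> pp pq op oq pnq.
have npq : ~~ (p %| q)%N by rewrite dvdn_prime2.
have nqp : ~~ (q %| p)%N by rewrite dvdn_prime2 // eq_sym.
by rewrite (legendre_eis pp op npq oq) (legendre_eis pq oq nqp op) -exprD lattice.
Qed.
Section Jacobi.
Local Open Scope ring_scope.

Definition jv (m n : nat) : int := \prod_(p <- primes n) legendre m p ^+ logn p n.

Lemma jacobiE m n : odd n -> jacobi m n = JInt (jv m n).
Proof. by rewrite /jacobi => ->. Qed.

Lemma jv_big m n N : (0 < n)%N -> (n < N)%N ->
  jv m n = \prod_(0 <= p < N | prime p) legendre m p ^+ logn p n.
Proof.
move=> n0 nN.
have E : \prod_(0 <= p < N | prime p) legendre m p ^+ logn p n =
         \prod_(0 <= p < N | p \in primes n) legendre m p ^+ logn p n.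
  rewrite big_mkcond [RHS]big_mkcond; apply: eq_bigr => p _.
  case pin: (p \in primes n).
    by move: (pin); rewrite mem_primes => /and3P[-> _ _].
  have : logn p n = 0%N by apply/eqP; rewrite -leqn0 leqNgt logn_gt0 pin.
  by move=> ->; rewrite expr0; case: (prime p).
rewrite E -big_filter /jv; apply: perm_big; apply: uniq_perm.
- exact: primes_uniq.
- by rewrite filter_uniq // iota_uniq.
move=> p; rewrite mem_filter mem_index_iota; case pin: (p \in primes n) => //=.
move: pin; rewrite mem_primes => /and3P[_ _ /dvdn_leq] /(_ n0) pn.
by apply/esym; apply: leq_trans nN.
Qed.

Lemma jv_mulr m a b : (0 < a)%N -> (0 < b)%N -> jv m (a * b) = jv m a * jv m b.
Proof.
move=> a0 b0; have ab0 : (0 < a * b)%N by rewrite muln_gt0 a0.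
have aN : (a < (a * b).+1)%N by rewrite ltnS leq_pmulr.
have bN : (b < (a * b).+1)%N by rewrite ltnS leq_pmull.
rewrite (jv_big m ab0 (ltnSn _)) (jv_big m a0 aN) (jv_big m b0 bN) -big_split /=.
by apply: eq_bigr => p _; rewrite lognM // exprD.
Qed.

Lemma jv_prime m p : prime p -> jv m p = legendre m p.
Proof. by move=> pp; rewrite /jv primes_prime // big_seq1 logn_prime // eqxx expr1. Qed.

Lemma jv_n1 m : jv m 1 = 1.
Proof. by rewrite /jv big_nil. Qed.

Lemma jv_mod m n : (0 < n)%N -> jv (m %% n) n = jv m n.
Proof.
move=> n0; rewrite /jv; apply: eq_big_seq => p; rewrite mem_primes => /and3P[_ _ pn].
by rewrite /legendre /dvdn -!(modn_dvdm m pn).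
Qed.

Lemma odd_prime p : prime p -> odd p \/ p = 2%N.
Proof. by case/even_prime; [right|left]. Qed.

Lemma primes_odd n p : odd n -> p \in primes n -> prime p /\ odd p.
Proof.
move=> on; rewrite mem_primes => /and3P[pp _ pn]; split => //.
case: (odd_prime pp) => // p2; by move: pn; rewrite p2 dvdn2 on.
Qed.

Lemma jv_mull a b n : odd n -> jv (a * b) n = jv a n * jv b n.
Proof.
move=> on; rewrite /jv -big_split /=; apply: eq_big_seq => p /(primes_odd on) [pp op].
by rewrite legendre_mul // exprMn.
Qed.

Lemma jv_1 n : odd n -> jv 1 n = 1.
Proof.
move=> on; rewrite /jv big_seq big1 // => p /(primes_odd on) [pp op].
by rewrite legendre_1 // expr1n.
Qed.

Lemma odd_ind (P : nat -> Prop) : P 1%N ->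
  (forall p n, prime p -> odd p -> odd n -> (0 < n)%N -> P n -> P (p * n)%N) ->
  forall n, odd n -> P n.
Proof.
move=> P1 Pstep n; elim: n {-2}n (leqnn n) => [|N IH] n nN on.
  by move: on; rewrite leqn0 in nN; rewrite (eqP nN).
case: (leqP n 1) => n1.
  by case: n n1 on {nN} => [|[|]].
have pp := pdiv_prime n1; have n0 : (0 < n)%N by apply: ltnW.
have e : n = (pdiv n * (n %/ pdiv n))%N by rewrite mulnC divnK // pdiv_dvd.
have : odd (pdiv n) && odd (n %/ pdiv n) by rewrite -oddM -e.
case/andP => op on'; rewrite e; apply: Pstep => //.
  by rewrite divn_gt0 ?prime_gt0 // dvdn_leq // pdiv_dvd.
apply: IH => //; rewrite -ltnS; apply: leq_trans nN.
by rewrite ltn_Pdiv // prime_gt1.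
Qed.

Lemma half_mul a b : odd a -> odd b -> odd (hp (a * b)) = odd (hp a) (+) odd (hp b).
Proof.
move=> oa ob; have oab : odd (a * b) by rewrite oddM oa.
have ea := hp_double oa; have eb := hp_double ob; have eab := hp_double oab.
have e : hp (a * b) = (2 * (hp a * hp b) + hp a + hp b)%N.
  move: ea eb eab; set x := hp a; set y := hp b; set z := hp (a * b) => ea eb eab.
  have : (a * b = (x + x).+1 * (y + y).+1)%N by rewrite -ea -eb.
  rewrite eab; nia.
rewrite e !oddD oddM /=; by case: (odd (hp a)); case: (odd (hp b)).
Qed.

Lemma sign_half_mul a b : odd a -> odd b ->
  (-1) ^+ hp (a * b) = (-1) ^+ hp a * (-1) ^+ hp b :> int.
Proof. by move=> oa ob; rewrite -signr_odd half_mul // signr_addb !signr_odd. Qed.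

Lemma sign_mulD x a b : odd a -> odd b ->
  (-1) ^+ (x * hp (a * b))%N = (-1) ^+ (x * hp a)%N * (-1) ^+ (x * hp b)%N :> int.
Proof.
move=> oa ob; rewrite -!(signr_odd _ (_ * _)%N) !oddM half_mul //.
by rewrite andb_addr signr_addb.
Qed.

Lemma jv_recip_prime p m : prime p -> odd p -> odd m -> ~~ (p %| m)%N ->
  legendre m p * jv p m = (-1) ^+ (hp p * hp m)%N.
Proof.
move=> pp op; move: m; apply: odd_ind.
  by move=> _; rewrite legendre_1 // jv_n1 muln0 mulr1.
move=> q n pq oq on n0 IH pqn.
have pq' : ~~ (p %| q)%N by apply: contra pqn => /dvdn_mulr.
have pn : ~~ (p %| n)%N by apply: contra pqn => /dvdn_mull.
have neq : p != q by apply: contra pq' => /eqP ->.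
rewrite legendre_mul // (jv_mulr _ (prime_gt0 pq) n0) jv_prime // sign_mulD //.
rewrite -(IH pn) -(quad_recip pp pq op oq neq).
ring.
Qed.

Lemma jv_recip m n : odd m -> odd n -> coprime m n ->
  jv m n * jv n m = (-1) ^+ (hp m * hp n)%N.
Proof.
move=> om; move: n; apply: odd_ind.
  by move=> _; rewrite jv_n1 jv_1 // muln0 mulr1.
move=> p n pp op on n0 IH cmn.
move: (cmn); rewrite coprimeMr => /andP[cmp cmnn].
rewrite (jv_mulr _ (prime_gt0 pp) n0) jv_mull // jv_prime // sign_mulD //.
rewrite -(IH cmnn) [(hp m * hp p)%N]mulnC -(jv_recip_prime pp op om); last first.
  by rewrite -prime_coprime // coprime_sym.
ring.
Qed.

Lemma pred_mul a b : (0 < a)%N -> (0 < b)%N -> ((a * b).-1 = a.-1 * b + b.-1)%N.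
Proof. by case: a => // a _; case: b => // b _; rewrite mulSn addSn /= addnC. Qed.

Lemma jv_neg n : odd n -> jv n.-1 n = (-1) ^+ hp n.
Proof.
move: n; apply: odd_ind; first by rewrite jv_n1 /hp /= expr0.
move=> p n pp op on n0 IH.
have p0 := prime_gt0 pp.
rewrite jv_mulr // jv_prime // sign_half_mul //.
have e1 : ((p * n).-1 %% p = p.-1)%N.
  have -> : (p * n).-1 = (n.-1 * p + p.-1)%N by rewrite mulnC pred_mul.
  by rewrite modnMDl modn_small // prednK ?leqnn.
have e2 : ((p * n).-1 %% n = n.-1)%N.
  have -> : (p * n).-1 = (p.-1 * n + n.-1)%N by rewrite pred_mul.
  by rewrite modnMDl modn_small // prednK ?leqnn.
rewrite -(legendre_mod) e1 legendre_neg1 // -jv_mod // e2 IH //.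
Qed.

End Jacobi.


Section CF.
Variable a : nat -> nat.

Lemma den0 : cf_den a 0 = 1%N. Proof. by []. Qed.
Lemma den1 : cf_den a 1 = a 1. Proof. rewrite /cf_den /=; lia. Qed.
Lemma denSS k : cf_den a k.+2 = (a k.+2 * cf_den a k.+1 + cf_den a k)%N.
Proof. by []. Qed.
Lemma num0 : cf_num a 0 = a 0. Proof. by []. Qed.
Lemma num1 : cf_num a 1 = (a 1 * a 0 + 1)%N. Proof. by []. Qed.
Lemma numSS k : cf_num a k.+2 = (a k.+2 * cf_num a k.+1 + cf_num a k)%N.
Proof. by []. Qed.

Lemma cf_det k : ((cf_num a k.+1 * cf_den a k)%:Z - (cf_num a k * cf_den a k.+1)%:Z
   = (-1) ^+ k)%R.
Proof.
elim: k => [|k IH].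
  by rewrite num1 num0 den1 den0 expr0 muln1 mulnC; lia.
rewrite numSS denSS exprS -IH; lia.
Qed.

Lemma cf_det_even k : ~~ odd k ->
  (cf_num a k.+1 * cf_den a k = cf_num a k * cf_den a k.+1 + 1)%N.
Proof. by move=> ok; have := cf_det k; rewrite -signr_odd (negbTE ok) expr0; lia. Qed.

Lemma cf_det_odd k : odd k ->
  (cf_num a k * cf_den a k.+1 = cf_num a k.+1 * cf_den a k + 1)%N.
Proof. by move=> ok; have := cf_det k; rewrite -signr_odd ok expr1; lia. Qed.

Lemma cf_coprime k : coprime (cf_den a k) (cf_den a k.+1).
Proof.
rewrite /coprime -dvdn1; set g := gcdn _ _.
have g1 : (g %| cf_den a k)%N by apply: dvdn_gcdl.
have g2 : (g %| cf_den a k.+1)%N by apply: dvdn_gcdr.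
case: (boolP (odd k)) => ok.
  have := cf_det_odd ok => e.
  have : (g %| cf_num a k * cf_den a k.+1)%N by apply: dvdn_mull.
  by rewrite e dvdn_addr // dvdn_mull.
have := cf_det_even ok => e.
have : (g %| cf_num a k.+1 * cf_den a k)%N by apply: dvdn_mull.
by rewrite e dvdn_addr // dvdn_mull.
Qed.

End CF.

Definition dig (c : nat -> bool) (n : nat) : nat :=
  match n with 0 => 1 | 1 => 1 | n'.+2 => if odd n' && c n'./2 then 2 else 4 end.

Section Dig.
Variable c : nat -> bool.
Local Notation a := (dig c).
Local Notation t := (cf_den (dig c)).
Local Notation s := (cf_num (dig c)).

Lemma dig_even k : ~~ odd k -> a k.+2 = 4%N.
Proof. by move=> ok /=; rewrite (negbTE ok). Qed.

Lemma dig_even2 k : ~~ odd (a k.+2).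
Proof. by rewrite /=; case: ifP. Qed.

Lemma t_odd k : odd (t k).
Proof.
elim: k {-2}k (leqnn k) => [|N IH] k kN; first by rewrite leqn0 in kN; rewrite (eqP kN).
case: k kN => [|[|k]] kN //.
rewrite denSS oddD oddM (negbTE (dig_even2 _)) /=; apply: IH; lia.
Qed.

Lemma t_pos k : (0 < t k)%N.
Proof. by have := t_odd k; case: (t k). Qed.

Lemma t_even_mod k : ~~ odd k -> exists q, t k = (4 * q + 1)%N.
Proof.
elim: k {-2}k (leqnn k) => [|N IH] k kN ok.
  by exists 0%N; rewrite leqn0 in kN; rewrite (eqP kN).
case: k kN ok => [|[|k]] kN ok; first by exists 0%N.
  by [].
have ok' : ~~ odd k by move: ok; rewrite /= negbK.
have [q eq] := IH k (ltac:(lia)) ok'.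
by exists (t k.+1 + q)%N; rewrite denSS dig_even // eq; lia.
Qed.

Lemma t_even_hp k : ~~ odd k -> ~~ odd (hp (t k)).
Proof.
move=> ok; have [q eq] := t_even_mod ok.
have e := hp_double (t_odd k).
have : hp (t k) = (2 * q)%N by lia.
by move=> ->; rewrite oddM.
Qed.

Lemma J_one k : jv (t k) (t k.+1) = 1%R.
Proof.
elim: k => [|k IH]; first by rewrite den1 /= jv_n1.
have cp := cf_coprime (dig c) k.+1.
have := jv_recip (t_odd k.+1) (t_odd k.+2) cp.
have -> : ((-1) ^+ (hp (t k.+1) * hp (t k.+2)) = 1 :> int)%R.
  rewrite -signr_odd oddM.
  case: (boolP (odd k)) => ok.
    by rewrite (negbTE (t_even_hp (k := k.+1) _)) ?expr0 //= negbK.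
  by rewrite (negbTE (t_even_hp (k := k.+2) _)) ?andbF ?expr0 //= negbK.
rewrite -(jv_mod (t k.+2) (t_pos k.+1)) denSS modnMDl jv_mod ?t_pos // IH.
by rewrite mulr1.
Qed.

Lemma jacobi_one k : jacobi_seq (dig c) k = JInt 1.
Proof.
rewrite /jacobi_seq jacobiE ?t_odd //; congr JInt.
case: k => [|j]; first by rewrite den0 jv_n1.
have T0 := t_pos j.+1.
have := jv_mull (cf_num (dig c) j.+1) (t j) (t_odd j.+1).
rewrite -(jv_mod _ T0) J_one mulr1 => <-.
case: (boolP (odd j)) => oj.
  have e := cf_det_odd (dig c) oj.
  have s0 : (0 < s j)%N by move: e; case: (s j) => //=; lia.
  have -> : (s j.+1 * t j = (s j).-1 * t j.+1 + (t j.+1).-1)%N.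
    by rewrite -pred_mul // e addn1.
  rewrite modnMDl modn_small ?prednK // ?leqnn // jv_neg ?t_odd //.
  by rewrite -signr_odd (negbTE (t_even_hp _)) ?expr0 //= negbK.
have e := cf_det_even (dig c) oj.
by rewrite e modnMDl jv_mod // jv_1 // t_odd.
Qed.

End Dig.

Import numFieldNormedType.Exports.
Local Open Scope classical_set_scope.
Local Open Scope ring_scope.

Section Real.
Variable R : realType.
Variable a : nat -> nat.
Hypothesis ha : forall i, (0 < a i)%N.
Local Notation t := (cf_den a).
Local Notation s := (cf_num a).

Definition u k : R := (s k)%:R / (t k)%:R.

Lemma tpos k : (0 < t k)%N.
Proof.
elim: k {-2}k (leqnn k) => [|N IH] k kN; first by rewrite leqn0 in kN; rewrite (eqP kN).
case: k kN => [|[|k]] kN; [by []|by rewrite den1 ha|].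
rewrite denSS addn_gt0 orbC IH //; lia.
Qed.

Lemma tge k : (k <= t k)%N.
Proof.
elim: k {-2}k (leqnn k) => [|N IH] k kN; first by rewrite leqn0 in kN; rewrite (eqP kN).
case: k kN => [|[|k]] kN; [by []|by rewrite den1 ha|].
rewrite denSS; have h1 := IH k.+1 (ltac:(lia)); have h2 := tpos k.
have h3 := ha k.+2; nia.
Qed.

Lemma tlt2 k : (t k < t k.+2)%N.
Proof. rewrite denSS; have := tpos k.+1; have := ha k.+2; nia. Qed.

Lemma tR k : (t k)%:R != 0 :> R.
Proof. by rewrite pnatr_eq0 -lt0n tpos. Qed.

Lemma tRpos k : 0 < (t k)%:R :> R.
Proof. by rewrite ltr0n tpos. Qed.

Lemma u_diff_even k : ~~ odd k -> u k.+1 - u k = 1 / ((t k)%:R * (t k.+1)%:R).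
Proof.
move=> ok; have e := cf_det_even a ok.
have eR : (s k.+1)%:R * (t k)%:R = (s k)%:R * (t k.+1)%:R + 1 :> R.
  by rewrite -!natrM e natrD.
have -> : u k.+1 - u k = ((s k.+1)%:R * (t k)%:R - (s k)%:R * (t k.+1)%:R) /
    ((t k)%:R * (t k.+1)%:R).
  move: (tR k) (tR k.+1); rewrite /u.
  move: (t k)%:R (t k.+1)%:R (s k)%:R (s k.+1)%:R => T0 T1 S0 S1 h0 h1.
  by field; rewrite h0 h1.
by rewrite eR addrAC subrr add0r.
Qed.

Lemma u_diff_odd k : odd k -> u k.+1 - u k = - (1 / ((t k)%:R * (t k.+1)%:R)).
Proof.
move=> ok; have e := cf_det_odd a ok.
have eR : (s k)%:R * (t k.+1)%:R = (s k.+1)%:R * (t k)%:R + 1 :> R.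
  by rewrite -!natrM e natrD.
have -> : u k.+1 - u k = ((s k.+1)%:R * (t k)%:R - (s k)%:R * (t k.+1)%:R) /
    ((t k)%:R * (t k.+1)%:R).
  move: (tR k) (tR k.+1); rewrite /u.
  move: (t k)%:R (t k.+1)%:R (s k)%:R (s k.+1)%:R => T0 T1 S0 S1 h0 h1.
  by field; rewrite h0 h1.
by rewrite eR opprD addrA subrr add0r mulNr.
Qed.

Lemma inv_pos k : 0 < 1 / ((t k)%:R * (t k.+1)%:R) :> R.
Proof. by rewrite divr_gt0 // mulr_gt0 // tRpos. Qed.

Lemma inv_lt k : 1 / ((t k.+1)%:R * (t k.+2)%:R) < 1 / ((t k)%:R * (t k.+1)%:R) :> R.
Proof.
rewrite !div1r ltf_pV2 ?posrE ?mulr_gt0 ?tRpos //.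
by rewrite [X in X < _]mulrC ltr_pM2l ?tRpos // ltr_nat tlt2.
Qed.

Lemma u_even_inc k : ~~ odd k -> u k < u k.+2.
Proof.
move=> ok; have ok1 : odd k.+1 by rewrite /= ok.
have := u_diff_even ok; have := u_diff_odd ok1; have := inv_lt k.
lra.
Qed.

Lemma u_odd_dec k : odd k -> u k.+2 < u k.
Proof.
move=> ok; have ok1 : ~~ odd k.+1 by rewrite /= ok.
have := u_diff_odd ok; have := u_diff_even ok1; have := inv_lt k.
lra.
Qed.

Definition ue n := u n.*2.
Definition uo n := u n.*2.+1.

Lemma ue_le m n : (m <= n)%N -> ue m <= ue n.
Proof.
move=> /subnK <-; elim: (n - m)%N => [|d IH]; first by rewrite add0n.
apply: (le_trans IH); rewrite /ue addSn doubleS; apply/ltW/u_even_inc.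
by rewrite odd_double.
Qed.

Lemma uo_ge m n : (m <= n)%N -> uo n <= uo m.
Proof.
move=> /subnK <-; elim: (n - m)%N => [|d IH]; first by rewrite add0n.
apply: (le_trans _ IH); rewrite /uo addSn doubleS; apply/ltW/u_odd_dec.
by rewrite /= odd_double.
Qed.

Lemma ue_lt_uo n : ue n < uo n.
Proof.
rewrite /ue /uo -subr_gt0 u_diff_even ?odd_double //; exact: inv_pos.
Qed.

Lemma ue_lt_uo_all n m : ue n < uo m.
Proof.
apply: (le_lt_trans (ue_le (leq_maxl n m))).
apply: (lt_le_trans (ue_lt_uo _)); exact: uo_ge (leq_maxr n m).
Qed.

Definition cfx : R := sup (range ue).

Lemma hs_ue : has_sup (range ue).
Proof.
split; first by exists (ue 0), 0%N.
by exists (uo 0) => y [n _ <-]; apply/ltW/ue_lt_uo_all.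
Qed.

Lemma ue_le_x n : ue n <= cfx.
Proof. by apply: sup_upper_bound hs_ue _ _; exists n. Qed.

Lemma x_le_uo m : cfx <= uo m.
Proof.
apply: ge_sup; first by exists (ue 0), 0%N.
by move=> y [n _ <-]; apply/ltW/ue_lt_uo_all.
Qed.

Lemma u_close k : `|cfx - u k| <= 1 / ((t k)%:R * (t k.+1)%:R) /\ cfx != u k.
Proof.
have ep := inv_pos k.
case: (boolP (odd k)) => ok.
  have ek : k = (k./2).*2.+1 by rewrite -[LHS]odd_double_half ok.
  have h1 : u k.+1 <= cfx.
    by have := ue_le_x (k./2).+1; rewrite /ue doubleS -ek.
  have h2 : cfx < u k.
    have := x_le_uo (k./2).+1; rewrite /uo doubleS -ek => h.
    apply: (le_lt_trans h); exact: u_odd_dec.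
  have := u_diff_odd ok => e.
  split; last by rewrite lt_eqF.
  rewrite ltr0_norm ?subr_lt0 // opprB.
  have : u k - u k.+1 = 1 / ((t k)%:R * (t k.+1)%:R) by rewrite -opprB e opprK.
  move=> <-; by rewrite lerD2l lerN2.
have ek : k = (k./2).*2 by rewrite -[LHS]odd_double_half (negbTE ok).
have h1 : cfx <= u k.+1.
  by have := x_le_uo (k./2); rewrite /uo -ek.
have h2 : u k < cfx.
  have := ue_le_x (k./2).+1; rewrite /ue doubleS -ek => h.
  apply: (lt_le_trans _ h); exact: u_even_inc.
have := u_diff_even ok => e.
split; last by rewrite gt_eqF.
rewrite gtr0_norm ?subr_gt0 // -e.
by rewrite lerD2r.
Qed.

Lemma bound_k k : 1 / ((t k)%:R * (t k.+1)%:R) <= k.+1%:R^-1 :> R.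
Proof.
rewrite div1r lef_pV2 ?posrE ?mulr_gt0 ?tRpos ?ltr0n //.
rewrite -natrM ler_nat; have := tge k.+1; have := tpos k; nia.
Qed.

Lemma cf_cvg : (fun k => (s k)%:R / (t k)%:R : R) @ \oo --> cfx.
Proof.
apply/cvgrPdist_lt => eps eps0.
have := near_infty_natSinv_lt (PosNum eps0); apply: filterS => k /= hk.
have [h _] := u_close k; rewrite /u in h.
by apply: (le_lt_trans h); apply: (le_lt_trans (bound_k k)).
Qed.


Lemma cfx_pos : 0 < cfx.
Proof.
apply: (lt_le_trans _ (ue_le_x 0)); rewrite /ue /u /= num0 den0 divr1 ltr0n.
exact: ha.
Qed.

Lemma int_lt1 (N : int) : `|(N%:~R : R)| < 1 -> N = 0.
Proof.
rewrite -intr_norm -[1 : R]/((1 : int)%:~R) ltr_int => h.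
apply/eqP; rewrite -normr_eq0; lia.
Qed.

Lemma cfx_irr : irrational cfx.
Proof.
move=> /rationalP [z [b e]].
have b0 : b != 0%N.
  apply/negP => /eqP b0; have := cfx_pos; rewrite e b0 invr0 mulr0 ltxx //.
have bR : (b%:R : R) != 0 by rewrite pnatr_eq0.
have [hk hne] := u_close b.
pose N : int := (z * (t b)%:Z - (b * s b)%:Z)%R.
have eN : (N%:~R : R) = (cfx - u b) * b%:R * (t b)%:R.
  rewrite /N intrB intrM e /u /=; move: (tR b); move: (t b) => T hT.
  rewrite -[((T%:Z)%:~R : R)]/(T%:R) -[(((b * s b)%N%:Z)%:~R : R)]/((b * s b)%N%:R).
  rewrite natrM; field; by rewrite bR hT.
have N0 : N = 0.
  apply: int_lt1; rewrite eN !normrM !normr_nat.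
  apply: (le_lt_trans (ler_wpM2r (ler0n _ _) (ler_wpM2r (ler0n _ _) hk))).
  have -> : 1 / ((t b)%:R * (t b.+1)%:R) * b%:R * (t b)%:R = b%:R / (t b.+1)%:R :> R.
    move: (tR b) (tR b.+1); move: (t b)%:R (t b.+1)%:R => T T' h h'.
    by field; rewrite h h'.
  rewrite ltr_pdivrMr ?tRpos // mul1r ltr_nat; have := tge b.+1; lia.
move: eN; rewrite N0 => /esym/eqP; rewrite !mulf_eq0 subr_eq0 (negbTE hne) (negbTE bR) (negbTE (tR b)) //.
Qed.

End Real.

Import numFieldNormedType.Exports.
Local Open Scope classical_set_scope.
Local Open Scope ring_scope.

Lemma cf_pair_ext (a1 a2 : nat -> nat) init k :
  (forall i, (i <= k)%N -> a1 i = a2 i) -> cf_pair a1 init k = cf_pair a2 init k.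
Proof.
elim: k => [//|k IH] h /=; rewrite IH ?h // => i ik; apply: h; lia.
Qed.

Lemma dig_pos c i : (0 < dig c i)%N.
Proof. by case: i => [|[|i]] //=; case: ifP. Qed.

Lemma dig_range c i : (1 <= dig c i <= 4)%N.
Proof. by case: i => [|[|i]] //=; case: ifP. Qed.

Lemma dig_odd c J : dig c J.*2.+3 = if c J then 2%N else 4%N.
Proof.
by rewrite /= odd_double /= uphalf_double.
Qed.

Lemma dig_two c n : dig c n = 2%N -> exists J, n = J.*2.+3 /\ c J.
Proof.
case: n => [|[|i]] //=; case: ifP => // /andP[oi ci] _.
exists i./2; split => //.
by rewrite -[in LHS](odd_double_half i) oi.
Qed.

Section Sep.
Variable R : realType.

Lemma dig_agree (c1 c2 : nat -> bool) j0 :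
  (forall j, (j < j0)%N -> c1 j = c2 j) ->
  forall i, (i <= j0.*2.+2)%N -> dig c1 i = dig c2 i.
Proof.
move=> h [|[|i]] // hi /=; case oi: (odd i) => //=.
rewrite h //; have := odd_double_half i; rewrite oi -!addnn => e.
move: hi; rewrite -!addnn; lia.
Qed.

Lemma dig_sep (c1 c2 : nat -> bool) j0 :
  (forall j, (j < j0)%N -> c1 j = c2 j) -> c1 j0 = true -> c2 j0 = false ->
  cfx R (dig c2) < cfx R (dig c1).
Proof.
move=> h c1t c2f.
have ag := dig_agree h.
set k := j0.*2.+1.
have eS k' : (k' <= k.+1)%N -> cf_num (dig c1) k' = cf_num (dig c2) k'.
  by move=> hk; rewrite /cf_num (cf_pair_ext (a2 := dig c2)) // => i hi; apply: ag; lia.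
have eT k' : (k' <= k.+1)%N -> cf_den (dig c1) k' = cf_den (dig c2) k'.
  by move=> hk; rewrite /cf_den (cf_pair_ext (a2 := dig c2)) // => i hi; apply: ag; lia.
have h2 : cfx R (dig c2) <= u R (dig c2) k.+2.
  by have := @x_le_uo R _ (dig_pos c2) j0.+1; rewrite /uo doubleS.
have h1 : u R (dig c1) k.+3 <= cfx R (dig c1).
  by have := @ue_le_x R _ (dig_pos c1) j0.+2; rewrite /ue !doubleS.
apply: (le_lt_trans h2); apply: lt_le_trans h1.
have d2 : dig c2 k.+2 = 4%N by rewrite /k dig_odd c2f.
have d1 : dig c1 k.+2 = 2%N by rewrite /k dig_odd c1t.
have d13 : dig c1 k.+3 = 4%N by rewrite /= /k odd_double /=.
rewrite /u (numSS _ k.+1) (denSS _ k.+1) (numSS (dig c1) k) (denSS (dig c1) k).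
rewrite (numSS (dig c2) k) (denSS (dig c2) k) d2 d1 d13.
rewrite -(eS k) // -(eT k) // -(eS k.+1) // -(eT k.+1) //.
have ok : odd k by rewrite /k /= odd_double.
have e := cf_det_odd (dig c1) ok.
move: e; set S' := cf_num _ k; set S := cf_num _ k.+1; set T' := cf_den _ k;
  set T := cf_den _ k.+1 => e.
have Tp : (0 < T)%N by apply: tpos; exact: dig_pos.
have T'p : (0 < T')%N by apply: tpos; exact: dig_pos.
rewrite ltr_pdivrMr ?ltr0n; last by lia.
rewrite mulrAC ltr_pdivlMr ?ltr0n; last by lia.
rewrite -!natrM ltr_nat.
have -> : ((4 * S + S') * (4 * (2 * T + T') + T) =
  36 * (S * T) + 16 * (S * T') + 9 * (S' * T) + 4 * (S' * T'))%N by ring.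
have -> : ((4 * (2 * S + S') + S) * (4 * T + T') =
  36 * (S * T) + 9 * (S * T') + 16 * (S' * T) + 4 * (S' * T'))%N by ring.
rewrite e; lia.
Qed.
End Sep.

Lemma cfx_dig_inj (R : realType) (c1 c2 : nat -> bool) :
  (exists j, c1 j != c2 j) -> cfx R (dig c1) != cfx R (dig c2).
Proof.
move=> ex.
have exb : exists j, (fun j => c1 j != c2 j) j by [].
pose j0 := ex_minn exb.
have [hj0 hmin] : c1 j0 != c2 j0 /\ forall j, (j < j0)%N -> c1 j = c2 j.
  rewrite /j0; case: ex_minnP => m hm hmin'; split => // j jm.
  by apply/eqP; apply: contraTT jm => /hmin'; rewrite -leqNgt.
case c1j: (c1 j0).
  have c2j : c2 j0 = false by move: hj0; rewrite c1j; case: (c2 j0).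
  by rewrite gt_eqF // (@dig_sep R c1 c2 j0 hmin c1j c2j).
have c2j : c2 j0 = true by move: hj0; rewrite c1j; case: (c2 j0).
rewrite lt_eqF // (@dig_sep R c2 c1 j0) // => j /hmin -> //.
Qed.

Definition issq (j : nat) : bool := [exists r : 'I_j.+1, (r * r == j)%N].

Lemma issqP j : reflect (exists r, (r * r = j)%N) (issq j).
Proof.
apply: (iffP existsP) => [[r /eqP e]|[r e]]; first by exists r.
have rj : (r < j.+1)%N by rewrite ltnS -e; case: r {e} => // r; rewrite leq_pmulr.
by exists (Ordinal rj); rewrite /= e.
Qed.

Lemma epwE (a : nat -> nat) p : eventually_periodic_with a p <->
  exists N, forall n, (N <= n)%N -> a (n + p)%N = a n.
Proof. by []. Qed.

Lemma per_mul (a : nat -> nat) p k : eventually_periodic_with a p ->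
  eventually_periodic_with a (k * p)%N.
Proof.
move/epwE => [N hN]; apply/epwE; exists N => n nN; elim: k => [|k IH]; first by rewrite mul0n addn0.
by rewrite mulSn addnCA addnC hN ?IH // (leq_trans nN) // leq_addr.
Qed.

Definition cb (b : nat -> bool) (j : nat) : bool :=
  if odd j then issq j./2 else b j./2.

Lemma cb_odd b j : cb b j.*2.+1 = issq j.
Proof. by rewrite /cb /= odd_double /= uphalf_double. Qed.

Lemma cb_even b j : cb b j.*2 = b j.
Proof. by rewrite /cb odd_double doubleK. Qed.

Lemma not_per b : ~ eventually_periodic (dig (cb b)).
Proof.
move=> [p [p0 hp]].
have /epwE [N hN] := per_mul 4 hp.
have key : forall j, (N <= j)%N -> issq (j + p)%N = issq j.
  move=> j jN.
  have := hN ((j.*2.+1).*2.+3) (ltac:(rewrite -!addnn; lia)).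
  have -> : ((j.*2.+1).*2.+3 + 4 * p = ((j + p).*2.+1).*2.+3)%N.
    by rewrite -!addnn; lia.
  rewrite !dig_odd !cb_odd.
  by case: (issq (j + p)); case: (issq j).
pose s := (N + p + 1)%N.
have : issq (s * s + p)%N.
  rewrite key; first by apply/issqP; exists s.
  rewrite /s; nia.
move/issqP => [r hr].
have sr : (s < r)%N.
  rewrite ltnNge; apply/negP => rs.
  have := leq_mul rs rs; rewrite hr; lia.
have := leq_mul sr sr; rewrite hr /s; nia.
Qed.

Definition cper (m : nat) (j : nat) : bool := (j %% m.+1 == 0)%N.

Lemma per_ok m : eventually_periodic_with (dig (cper m)) (m.+1).*2.
Proof.
apply/epwE; exists 2%N => n; case: n => [|[|i]] // _.
rewrite addSn addSn /= oddD odd_double addbF halfD odd_double andbF add0n doubleK.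
by rewrite /cper modnDr.
Qed.

Lemma per_min m q : (0 < q)%N -> eventually_periodic_with (dig (cper m)) q ->
  ((m.+1).*2 <= q)%N.
Proof.
move=> q0 /epwE [N hN].
pose J := (N * m.+1)%N.
have cJ : cper m J by rewrite /cper /J modnMl.
have JN : (N <= J)%N by rewrite /J leq_pmulr.
clearbody J.
have := hN J.*2.+3 (ltac:(rewrite -!addnn; lia)).
rewrite dig_odd cJ => /dig_two [J' [e cJ']].
have JJ : (J < J')%N by move: e; rewrite -!addnn; lia.
have dv : (m.+1 %| J' - J)%N.
  by apply: dvdn_sub; rewrite /dvdn; [move: cJ'|move: cJ]; rewrite /cper.
have h0 : (0 < J' - J)%N by lia.
have := dvdn_leq h0 dv.
move: e; rewrite -!addnn; lia.
Qed.

Lemma no_inj_bool_nat (F : (nat -> bool) -> nat) : ~ injective F.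
Proof.
move=> Finj.
pose d n := ~~ `[< exists b : nat -> bool, F b = n /\ b n >].
case E: (d (F d)).
  have E' := E; move: E; rewrite {1}/d => /negP; apply; apply/asboolP.
  by exists d; split.
have E' := E; move: E; rewrite {1}/d => /negbFE /asboolP [b [Fb bF]].
by move: bF; rewrite (Finj _ _ Fb) E'.
Qed.

Local Open Scope classical_set_scope.
Local Open Scope ring_scope.

Unset Implicit Arguments.

Theorem theorem3 (R : realType) :
  (forall C : R, 0 < C ->
     exists (x : R) (a : nat -> nat),
       irrational x /\ cf_expansion x a /\ four_digits a /\
       (exists p : nat, period_length a p /\ C <= p%:R) /\
       (forall k, jacobi_seq a k = JInt 1)) /\
  ~ countable [set x : R | irrational x /\
       exists a : nat -> nat, cf_expansion x a /\ four_digits a /\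
         ~ eventually_periodic a /\ (forall k, jacobi_seq a k = JInt 1)].
Proof.
split.
  move=> C C0.
  pose m := Num.trunc C.
  pose c := cper m.
  exists (cfx R (dig c)), (dig c).
  split; first exact: cfx_irr (dig_pos c).
  split; first by split => [i _|]; [exact: dig_pos|exact: cf_cvg (dig_pos c)].
  split; first exact: dig_range.
  split; last exact: jacobi_one.
  exists (m.+1).*2; split.
    split; first by rewrite double_gt0.
    split; first exact: per_ok.
    exact: per_min.
  apply/ltW/(lt_le_trans (truncnS_gt C)); rewrite ler_nat -/m -addnn; lia.
move=> /countable_injP [f finj].
have mem b : cfx R (dig (cb b)) \in [set x : R | irrational x /\
       exists a : nat -> nat, cf_expansion x a /\ four_digits a /\
         ~ eventually_periodic a /\ (forall k, jacobi_seq a k = JInt 1)].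
  rewrite inE; split; first exact: cfx_irr (dig_pos (cb b)).
  exists (dig (cb b)); split.
    by split => [i _|]; [exact: dig_pos|exact: cf_cvg (dig_pos (cb b))].
  split; first exact: dig_range.
  split; first exact: not_per.
  exact: jacobi_one.
apply: (@no_inj_bool_nat (fun b => f (cfx R (dig (cb b))))).
move=> b1 b2 /(finj _ _ (mem b1) (mem b2)) h.
apply/funext => j; apply/eqP; apply: contraT => hj.
have := @cfx_dig_inj R (cb b1) (cb b2) (ex_intro _ j.*2 _).
by rewrite !cb_even h eqxx => /(_ hj).
Qed.
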